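(* Let $n \geq 1$ and $d \geq 0$ be integers. If $F$ is a graph with maximum degree at most $d$ on at least $dn + 2^n$ vertices, then the complement of $F$ contains a copy of $Q_n$. As a consequence, $r(Q_n, K_3) \leq 2^n(n+1)$ for every $n \geq 1$.
   Context: The hypercube $Q_n$ is the graph on vertex set $\{0,1\}^n$ in which two vertices are adjacent if and only if they differ in exactly one coordinate. For graphs $G,H$, $r(G,H)$ is the smallest $N$ such that every red/blue edge-coloring of $K_N$ contains a red copy of $G$ or a blue copy of $H$. *)

(* Defs.v *)
From mathcomp Require Import all_boot.
Set Implicit Arguments. Unset Strict Implicit. Unset Printing Implicit Defensive.

Definition simple_graph (T : finType) (E : rel T) : Prop :=
  symmetric E /\ irreflexive E.

Definition max_degree_le (T : finType) (E : rel T) (d : nat) : Prop :=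
  forall x : T, #|[set y | E x y]| <= d.

Definition complement (T : finType) (E : rel T) : rel T :=
  fun x y => (x != y) && ~~ E x y.

Definition contains_copy (U V : finType) (G : rel U) (H : rel V) : Prop :=
  exists f : U -> V, injective f /\ (forall x y, G x y -> H (f x) (f y)).

Definition cube_vertex (n : nat) := {ffun 'I_n -> bool}.
Definition hypercube (n : nat) : rel (cube_vertex n) :=
  fun u v => #|[set i | u i != v i]| == 1.

Definition complete_graph (m : nat) : rel 'I_m := fun x y => x != y.

(* Ramsey arrow: every red/blue colouring of the edges of K_N
   (c x y = true means the edge xy is red; c is symmetric) contains
   a red copy of G or a blue copy of H.  r(G,H) <= N iff this holds. *)
Definition red_graph (N : nat) (c : rel 'I_N) : rel 'I_N :=
  fun x y => (x != y) && c x y.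
Definition blue_graph (N : nat) (c : rel 'I_N) : rel 'I_N :=
  fun x y => (x != y) && ~~ c x y.
Definition ramsey_arrow (N : nat) (U V : finType) (G : rel U) (H : rel V) : Prop :=
  forall c : rel 'I_N, symmetric c ->
    contains_copy G (red_graph c) \/ contains_copy H (blue_graph c).
Arguments hypercube n : clear implicits.
Arguments complete_graph m : clear implicits.
Arguments ramsey_arrow N [U V] G H.

(* Main.v *)
Require Import Defs.
From mathcomp Require Import all_boot.
From mathcomp Require Import zify.

Lemma card_bigcup_le (I T : finType) (P : pred I) (F : I -> {set T}) :
  #|\bigcup_(i | P i) F i| <= \sum_(i | P i) #|F i|.
Proof.
apply: (big_rec2 (fun (U : {set T}) s => #|U| <= s)); first by rewrite cards0.
move=> i U s _ H; rewrite cardsU; lia.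
Qed.

Lemma greedy (U T : finType) (G : rel U) (F : rel T) (D d : nat) (t0 : T) :
  symmetric G -> irreflexive G -> symmetric F ->
  (forall x, #|[set y | G x y]| <= D) -> max_degree_le F d ->
  #|U| + D * d <= #|T| ->
  exists f : U -> T, injective f /\ (forall x y, G x y -> complement F (f x) (f y)).
Proof.
move=> Gs Gi Fs GD Fd hcard.
have key : forall k (S : {set U}), #|S| <= k -> exists f : U -> T,
   {in S &, injective f} /\
   (forall x y, x \in S -> y \in S -> G x y -> complement F (f x) (f y)).
  elim=> [|k IH] S hS.
    have S0 : S = set0 by apply/eqP; rewrite -cards_eq0 -leqn0.
    by exists (fun _ => t0); rewrite S0; split=> x; rewrite inE.
  case: (set_0Vmem S) => [S0|[x xS]].
    by apply: IH; rewrite S0 cards0.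
  set S' := S :\ x.
  have hS' : #|S'| <= k by move: hS; rewrite (cardsD1 x S) xS.
  have hS'U : #|S'| < #|U|.
    have h := max_card S; rewrite (cardsD1 x S) xS in h; rewrite /S'; lia.
  have [f [finj fadj]] := IH S' hS'.
  set B := f @: S' :|: \bigcup_(y | (y \in S') && G x y) [set w | F (f y) w].
  have hB : #|B| < #|T|.
    rewrite /B cardsU.
    have h1 := leq_imset_card f S'.
    have h2 := @card_bigcup_le _ _ (fun y => (y \in S') && G x y)
                 (fun y => [set w | F (f y) w]).
    have h3 : \sum_(y | (y \in S') && G x y) #|[set w | F (f y) w]|
              <= \sum_(y | (y \in S') && G x y) d.
      by apply: leq_sum => y _; apply: Fd.
    have h4 : \sum_(y | (y \in S') && G x y) d <= D * d.
      rewrite sum_nat_const; apply: leq_mul => //.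
      apply: leq_trans (GD x); apply: subset_leq_card.
      by apply/subsetP => y; rewrite !inE => /andP[].
    lia.
  have : 0 < #|~: B| by have := cardsC B; lia.
  case/card_gt0P => v; rewrite inE in_setU negb_or => /andP[vf vF].
  exists (fun z => if z == x then v else f z); split.
    move=> a b aS bS /=.
    case: (eqVneq a x) => [->|ax]; case: (eqVneq b x) => [->|bx] //.
    - move=> vfb; move: vf; rewrite vfb imset_f //.
      by rewrite /S' !inE bx.
    - move=> vfa; move: vf; rewrite -vfa imset_f //.
      by rewrite /S' !inE ax.
    - by apply: finj; rewrite /S' !inE ?ax ?bx.
  move=> a b aS bS /=.
  case: (eqVneq a x) => [->|ax]; case: (eqVneq b x) => [->|bx] //.
  - by rewrite Gi.
  - move=> Gxb; rewrite /complement.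
    have bS' : b \in S' by rewrite /S' !inE bx.
    apply/andP; split.
      by apply: contraNneq vf => ->; rewrite imset_f.
    apply: contraNN vF => Fv; apply/bigcupP; exists b; first by rewrite bS' Gxb.
    by rewrite inE Fs.
  - move=> Gax; rewrite /complement.
    have aS' : a \in S' by rewrite /S' !inE ax.
    apply/andP; split.
      by apply: contraNneq vf => <-; rewrite imset_f.
    apply: contraNN vF => Fv; apply/bigcupP; exists a; first by rewrite aS' Gs.
    by rewrite inE.
  - by apply: fadj; rewrite /S' !inE ?ax ?bx.
have [f [finj fadj]] := key #|U| setT (max_card _).
exists f; split.
  by move=> a b; apply: finj; rewrite inE.
by move=> a b; apply: fadj; rewrite inE.
Qed.

Lemma cube_sym n : symmetric (hypercube n).
Proof.
move=> u v; rewrite /hypercube.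
have -> : [set i | u i != v i] = [set i | v i != u i].
  by apply/setP => i; rewrite !inE eq_sym.
by [].
Qed.

Lemma cube_irr n : irreflexive (hypercube n).
Proof.
move=> u; rewrite /hypercube.
have -> : [set i | u i != u i] = set0 by apply/setP => i; rewrite !inE eqxx.
by rewrite cards0.
Qed.

Lemma cube_card n : #|cube_vertex n| = 2 ^ n.
Proof. by rewrite /cube_vertex card_ffun card_bool card_ord. Qed.

Lemma cube_deg n (u : cube_vertex n) : #|[set v | hypercube n u v]| <= n.
Proof.
pose flip i : cube_vertex n := [ffun j => if j == i then ~~ u j else u j].
have sub : [set v | hypercube n u v] \subset flip @: [set: 'I_n].
  apply/subsetP => v; rewrite inE /hypercube => /cards1P [i hi].
  have -> : v = flip i.
    apply/ffunP => j; rewrite ffunE.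
    have := congr1 (fun A : {set 'I_n} => j \in A) hi; rewrite !inE /=.
    case: (eqVneq j i) => [->|_]; first by case: (u i); case: (v i).
    by move/negbFE/eqP.
  by rewrite imset_f.
apply: leq_trans (subset_leq_card sub) _.
by apply: leq_trans (leq_imset_card _ _) _; rewrite cardsT card_ord.
Qed.

Lemma part1 (n d : nat) (T : finType) (F : rel T) :
      1 <= n -> simple_graph F -> max_degree_le F d ->
      d * n + 2 ^ n <= #|T| ->
      contains_copy (hypercube n) (complement F).
Proof.
move=> hn [Fs Fi] Fd hc.
have : 0 < #|T| by have := expn_gt0 2 n; lia.
case/card_gt0P => t0 _.
have [f [fi fa]] := @greedy _ _ (hypercube n) F n d t0 (@cube_sym n) (@cube_irr n)
   Fs (@cube_deg n) Fd ltac:(rewrite cube_card; lia).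
by exists f.
Qed.

Lemma part2 n : 1 <= n ->
      ramsey_arrow (2 ^ n * (n + 1)) (hypercube n) (complete_graph 3).
Proof.
move=> hn c cs.
set N := 2 ^ n * (n + 1).
have bs : symmetric (blue_graph c).
  by move=> x y; rewrite /blue_graph eq_sym cs.
case: (boolP [exists v, 2 ^ n <= #|[set y | blue_graph c v y]|]) => [/existsP [v hv]|hno].
  set Nb := [set y | blue_graph c v y].
  case: (boolP [exists y in Nb, exists z in Nb, blue_graph c y z]).
    case/exists_inP => y yN /exists_inP [z zN byz].
    right; rewrite !inE in yN zN.
    exists (fun i : 'I_3 => nth v [:: v; y; z] i); split.
      have vy : v != y by case/andP: yN.
      have vz : v != z by case/andP: zN.
      have yz : y != z by case/andP: byz.
      move=> [[|[|[|i]]] hi] [[|[|[|j]]] hj] //= e; apply: val_inj => //=;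
        by move: vy vz yz; rewrite e ?eqxx // => _ _ /negP.
    move=> [[|[|[|i]]] hi] [[|[|[|j]]] hj] //=; rewrite /complete_graph //= => _;
      by rewrite // bs.
  rewrite negb_exists_in => /forall_inP nob.
  left.
  have hle : #|cube_vertex n| <= #|Nb| by rewrite cube_card.
  exists (fun u => enum_val (widen_ord hle (enum_rank u))); split.
    move=> a b /enum_val_inj e; apply: enum_rank_inj; apply: val_inj.
    by move: (congr1 val e).
  move=> a b hab.
  have hne : a != b by apply: contraTneq hab => ->; rewrite cube_irr.
  set x := enum_val _; set y := enum_val _.
  have xN : x \in Nb by apply: enum_valP.
  have yN : y \in Nb by apply: enum_valP.
  have xy : x != y.
    apply: contra hne => /eqP /enum_val_inj e; apply/eqP; apply: enum_rank_inj.
    by apply: val_inj; move: (congr1 val e).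
  have := nob x xN; rewrite negb_exists_in => /forall_inP /(_ y yN).
  by rewrite /blue_graph /red_graph xy /= negbK => ->.
left.
have Fd : max_degree_le (blue_graph c) (2 ^ n - 1).
  move=> x; move: hno; rewrite negb_exists => /forallP /(_ x); rewrite -ltnNge.
  have := expn_gt0 2 n; lia.
have bi : irreflexive (blue_graph c) by move=> x; rewrite /blue_graph eqxx.
have [f [fi fa]] := @part1 n (2 ^ n - 1) _ (blue_graph c) hn (conj bs bi) Fd
   ltac:(rewrite card_ord /N; have := expn_gt0 2 n; nia).
exists f; split => // a b /fa.
rewrite /complement /blue_graph /red_graph => /andP[-> ].
by case: (f a != f b) => //=; rewrite negbK.
Qed.

Theorem mainTheorem5 :
  (forall (n d : nat) (T : finType) (F : rel T),
      1 <= n -> simple_graph F -> max_degree_le F d ->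
      d * n + 2 ^ n <= #|T| ->
      contains_copy (hypercube n) (complement F))
  /\
  (forall n : nat, 1 <= n ->
      ramsey_arrow (2 ^ n * (n + 1)) (hypercube n) (complete_graph 3)).
Proof.
split; [exact: part1 | exact: part2].
Qed.
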